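(* Let $N\ge 3$, $b\ge 1$ an integer, $\gamma>0$, and let $C\in\mathbb{R}^{N\times N}$ be a circulant matrix with $C\mathbb{1}=0$ and $r=\operatorname{rank}(C)$. Consider the plant $\dot x=u+w$, $z=\begin{bmatrix}C\\0\end{bmatrix}x+\begin{bmatrix}0\\ \gamma I\end{bmatrix}u$ with $x,u,w\in\mathbb{R}^N$ (one scalar state per node of the ring $\mathbb{Z}_N$), in feedback with a state-feedback controller $u=Kx$, $K$ a proper rational $N\times N$ transfer matrix, with closed-loop maps $\Phi_x=(sI-K)^{-1}$, $\Phi_u=K(sI-K)^{-1}$ and closed loop $\mathcal{F}(P;K)=\begin{bmatrix}C\Phi_x\\ \gamma\Phi_u\end{bmatrix}$ from $w$ to $z$. If $r>2b+1$, then there is no controller $K$ such that simultaneously: $K\mathbb{1}=0$; $\Phi_x,\Phi_u$ are strictly proper; $\Phi_x,\Phi_u$ are TF-structured with respect to $\mathcal{A}^{(b)}$; and $\mathcal{F}(P;K)$ is stable (has finite $\mathcal{H}_2$ norm). Equivalently, every relative controller that is closed-loop TF-structured with respect to $\mathcal{A}^{(b)}$ yields an unstable $\mathcal{F}(P;K)$.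
   Context: $\mathbb{1}$ is the all-ones vector. $\mathcal{A}^{(b)}$ is the $N\times N$ 0/1 matrix with $\mathcal{A}^{(b)}_{ij}=1$ iff the circular distance $\min(|i-j|,N-|i-j|)$ is at most $b$ (nodes within $b$ hops on the ring with nearest-neighbor edges). A transfer matrix $\Phi$ is TF-structured with respect to $\mathcal{A}^{(b)}$ if $\Phi_{ij}(s)\equiv 0$ whenever $\mathcal{A}^{(b)}_{ij}=0$. *)

(* Defs.v *)
From HB Require Import structures.
From mathcomp Require Import all_boot all_order all_algebra.
From mathcomp Require Import fraction.
From mathcomp Require Import complex.
From mathcomp Require Import reals.
Set Implicit Arguments. Unset Strict Implicit. Unset Printing Implicit Defensive.
Import Order.TTheory GRing.Theory Num.Theory.
Local Open Scope ring_scope.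

Section Defs.
Variable R : realType.

Definition tf := {fraction {poly R}}.

Definition tfpoly (p : {poly R}) : tf := @FracField.tofrac _ p.
Definition tfconst (r : R) : tf := tfpoly r%:P.
Definition tfs : tf := tfpoly 'X.

Definition proper_tf (f : tf) : Prop :=
  exists p q : {poly R}, q != 0 /\ f = tfpoly p / tfpoly q /\ (size p <= size q)%N.
Definition strictly_proper_tf (f : tf) : Prop :=
  exists p q : {poly R}, q != 0 /\ f = tfpoly p / tfpoly q /\ (size p < size q)%N.

Definition hurwitz (q : {poly R}) : Prop :=
  forall z : R[i], 0 <= Re z -> (map_poly (fun x : R => (x%:C)%C) q).[z] != 0.

(* stable = in RH2: strictly proper with all poles in the open left half
   plane (equivalently, finite H2 norm) *)
Definition stable_tf (f : tf) : Prop :=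
  exists p q : {poly R}, q != 0 /\ f = tfpoly p / tfpoly q /\
    (size p < size q)%N /\ hurwitz q.

Definition mx_all {m n} (P : tf -> Prop) (M : 'M[tf]_(m, n)) : Prop :=
  forall i j, P (M i j).

End Defs.

Definition circdist (N : nat) (i j : nat) : nat :=
  let d := (maxn i j - minn i j)%N in minn d (N - d).

Definition Ab (N b : nat) : 'M[nat]_N :=
  \matrix_(i < N, j < N) (if (circdist N i j <= b)%N then 1%N else 0%N).

Definition tf_structured (R : realType) (N : nat) (A : 'M[nat]_N)
  (Phi : 'M[tf R]_N) : Prop :=
  forall i j : 'I_N, A i j = 0%N -> Phi i j = 0.

Definition circulant (R : realType) (N : nat) (C : 'M[R]_N) : Prop :=
  forall i j k l : 'I_N, ((j + N - i) %% N = (l + N - k) %% N)%N -> C i j = C k l.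

Definition Phi_x (R : realType) (N : nat) (K : 'M[tf R]_N) : 'M[tf R]_N :=
  invmx ((tfs R)%:M - K).
Definition Phi_u (R : realType) (N : nat) (K : 'M[tf R]_N) : 'M[tf R]_N :=
  K *m Phi_x K.

Definition closed_loop (R : realType) (N : nat) (C : 'M[R]_N) (gamma : R)
  (K : 'M[tf R]_N) : 'M[tf R]_(N + N, N) :=
  col_mx (map_mx (@tfconst R) C *m Phi_x K) (tfconst gamma *: Phi_u K).

(* Main.v *)
Require Import Defs.
From HB Require Import structures.
From mathcomp Require Import all_boot all_order all_algebra.
From mathcomp Require Import fraction complex reals.
From mathcomp Require Import ring lra zify.
Import Order.TTheory GRing.Theory Num.Theory.
Local Open Scope ring_scope.


Set Implicit Arguments. Unset Strict Implicit.
Section Reg.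
Variable R : realType.
Local Notation tf := (tf R).
Local Notation tfpoly := (@tfpoly R).

Lemma tfpolyD p q : tfpoly (p + q) = tfpoly p + tfpoly q.
Proof. exact: rmorphD. Qed.
Lemma tfpolyM p q : tfpoly (p * q) = tfpoly p * tfpoly q.
Proof. exact: rmorphM. Qed.
Lemma tfpoly1 : tfpoly 1 = 1.
Proof. exact: rmorph1. Qed.
Lemma tfpoly0 : tfpoly 0 = 0.
Proof. exact: rmorph0. Qed.
Lemma tfpoly_eq0 p : (tfpoly p == 0) = (p == 0).
Proof. exact: tofrac_eq0. Qed.
Lemma tfpoly_inj p q : tfpoly p = tfpoly q -> p = q.
Proof. by move=> h; apply/eqP; rewrite -tofrac_eq; apply/eqP. Qed.

Lemma cancelR (F : fieldType) (a b c : F) : b != 0 -> a * b / (c * b) = a / c.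
Proof. by move=> hb; rewrite invfM mulrACA mulfV // mulr1. Qed.

Definition reg0 (f : tf) (c : R) : Prop :=
  exists p q : {poly R}, q.[0] != 0 /\ f = tfpoly p / tfpoly q /\ p.[0] = c * q.[0].

Lemma q0_neq0 {q : {poly R}} : q.[0] != 0 -> tfpoly q != 0.
Proof. by move=> h; rewrite tfpoly_eq0; apply: contra h => /eqP ->; rewrite horner0. Qed.

Lemma reg0_uniq f c d : reg0 f c -> reg0 f d -> c = d.
Proof.
move=> [p [q [hq [-> hp]]]] [p' [q' [hq' [e hp']]]].
have hq1 := q0_neq0 hq; have hq2 := q0_neq0 hq'.
have : tfpoly (p * q') = tfpoly (p' * q).
  by rewrite !tfpolyM -[tfpoly p](divfK hq1) e mulrAC divfK.
move/tfpoly_inj/(congr1 (fun r => r.[0])); rewrite !hornerM hp hp'.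
move=> h; apply: (mulIf hq'); apply: (mulIf hq).
by rewrite mulrAC h mulrAC.
Qed.

Lemma reg0D f g c d : reg0 f c -> reg0 g d -> reg0 (f + g) (c + d).
Proof.
move=> [p [q [hq [-> hp]]]] [p' [q' [hq' [-> hp']]]].
exists (p * q' + p' * q), (q * q'); split; first by rewrite hornerM mulf_neq0.
split; last by rewrite hornerD !hornerM hp hp'; ring.
rewrite tfpolyD !tfpolyM mulrDl.
have h1 := q0_neq0 hq; have h2 := q0_neq0 hq'.
by rewrite (cancelR _ _ h2) [tfpoly q * _]mulrC (cancelR _ _ h1).
Qed.

Lemma reg0_const a : reg0 (tfconst a) a.
Proof.
exists a%:P, 1; split; first by rewrite hornerC oner_neq0.
by rewrite tfpoly1 divr1 !hornerC mulr1.
Qed.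

Lemma reg0M f g c d : reg0 f c -> reg0 g d -> reg0 (f * g) (c * d).
Proof.
move=> [p [q [hq [-> hp]]]] [p' [q' [hq' [-> hp']]]].
exists (p * p'), (q * q'); split; first by rewrite hornerM mulf_neq0.
split; last by rewrite !hornerM hp hp'; ring.
by rewrite !tfpolyM invfM mulrACA.
Qed.

Lemma reg0_sum (I : finType) (F : I -> tf) (c : I -> R) :
  (forall i, reg0 (F i) (c i)) -> reg0 (\sum_i F i) (\sum_i c i).
Proof.
move=> h; elim/big_rec2: _ => [|i x y _ hy]; last exact: reg0D.
by have := reg0_const 0; rewrite /tfconst tfpoly0.
Qed.

Lemma hurwitz0 {q : {poly R}} : hurwitz q -> q.[0] != 0.
Proof.
move=> h; have H0 : 0 <= 'Re (0 : R[i]) by rewrite ReE rmorph0 addr0 mul0r.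
have H := h 0 H0.
move: H; rewrite horner_map /= => H; apply: contra H => /eqP ->.
by rewrite eqxx.
Qed.

Lemma stable_reg0 f : stable_tf f -> exists c, reg0 f c.
Proof.
move=> [p [q [_ [-> [_ hq]]]]]; have hq0 := hurwitz0 hq.
exists (p.[0] / q.[0]), p, q; do 2!split => //.
by rewrite mulrVK // unitfE.
Qed.

Lemma stable_reg0X f : stable_tf f -> reg0 (tfs R * f) 0.
Proof.
move=> [p [q [_ [-> [_ hq]]]]]; have hq0 := hurwitz0 hq.
exists ('X * p), q; split => //; split.
  by rewrite /tfs tfpolyM mulrA.
by rewrite hornerM hornerX mul0r mul0r.
Qed.
End Reg.
Unset Implicit Arguments. Set Strict Implicit.


Section LA.
Variable R : realType.
Variable n : nat.
Local Notation N := n.+1.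

Lemma circ0 {C : 'M[R]_N} : circulant C -> forall i j : 'I_N, C i j = C 0 (j - i).
Proof.
move=> hC i j; apply: hC => /=.
by rewrite subn0 modnDr modn_mod modnDmr addnBA // ltnW.
Qed.

Lemma circ_shift {C : 'M[R]_N} : circulant C ->
  forall i j t : 'I_N, C (i + t) (j + t) = C i j.
Proof.
move=> hC i j t; rewrite (circ0 hC i) (circ0 hC (i + t)); congr (C 0 _).
by rewrite opprD addrACA subrr addr0.
Qed.

Lemma shift_ker (C : 'M[R]_N) (v : 'cV[R]_N) (t : 'I_N) :
  circulant C -> C *m v = 0 -> C *m (\col_i v (i + t) 0) = 0.
Proof.
move=> hC hv; apply/matrixP => i k; rewrite !mxE.
have inj : injective (fun j : 'I_N => j - t).
  by move=> x y /(congr1 (fun z => z + t)); rewrite !subrK.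
rewrite (reindex_inj inj) /=.
have -> : \sum_j C i (j - t) * (\col_i0 v (i0 + t) 0) (j - t) k
          = \sum_j C (i + t) j * v j 0.
  apply: eq_bigr => j _; rewrite !mxE subrK.
  by rewrite -(circ_shift hC i (j - t) t) subrK.
by have := congr1 (fun M : 'cV[R]_N => M (i + t) k) hv; rewrite !mxE ord1 => ->.
Qed.

Lemma inZp_addN (i : 'I_N) (k : nat) : (k < N)%N ->
  (inZp (i + N - k) : 'I_N) = i - inZp k.
Proof.
move=> hk; apply: (@addIr _ (inZp k)); rewrite subrK.
apply/val_inj => /=.
by rewrite modnDm subnK ?modnDr ?modn_small // ltnW // ltn_addl.
Qed.

Lemma band_rank (C : 'M[R]_N) (v : 'cV[R]_N) (a : 'I_N) (w : nat) :
  circulant C -> C *m v = 0 -> v != 0 -> (1 <= w <= N)%N ->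
  (forall k, (w <= k < N)%N -> v (a + inZp k) 0 = 0) ->
  ((N - w).+1 <= N - \rank C)%N.
Proof.
move=> hC hv vn0 /andP[w1 wN] hwin.
pose u k := v (a + inZp k) 0.
have uper k : u (k + N)%N = u k.
  by rewrite /u; congr (v (a + _) 0); apply: val_inj => /=; rewrite modnDr.
have [i0 hi0] : exists i, v i 0 != 0.
  apply/existsP; apply: contraR vn0 => /existsPn h.
  by apply/eqP/matrixP => i j; rewrite ord1 mxE; apply/eqP/negPn/h.
have exL : exists k, (k < w)%N && (u k != 0).
  pose d : 'I_N := (i0 - a)%R.
  exists d; have eu : u d = v i0 0.
    by rewrite /u valZpK /d addrC subrK.
  rewrite eu hi0 andbT; case: (ltnP d w) => // hw.
  by move: hi0; rewrite -eu /u hwin ?eqxx // hw ltn_ord.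
have ubL : forall k, (k < w)%N && (u k != 0) -> (k <= w)%N.
  by move=> k /andP[/ltnW].
case: (ex_maxnP exL ubL) => L /andP[Lw uL] Lmax.
have uz k : (L < k < N)%N -> u k = 0.
  move=> /andP[Lk kN]; case: (ltnP k w) => kw; last by apply: hwin; rewrite kw.
  apply/eqP; apply: contraTT Lk => ukn; rewrite -leqNgt; apply: Lmax.
  by rewrite kw ukn.
pose m := (N - w).+1.
have km (k : 'I_m) : (k < N)%N.
  by have := ltn_ord k; rewrite /m; lia.
pose W := \matrix_(k < m, i < N) v (i + (a - inZp k)) 0.
have WE (k : 'I_m) (i : 'I_N) : W k i = u (i + N - k)%N.
  by rewrite mxE /u inZp_addN ?km // addrCA.
have WC : W *m C^T = 0.
  apply/matrixP => k l; rewrite !mxE.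
  have := congr1 (fun M : 'cV[R]_N => M l 0) (shift_ker _ _ (a - inZp k) hC hv).
  rewrite !mxE => h; apply: eq_trans h; apply: eq_bigr => i _; rewrite !mxE mulrC.
  by [].
have xW (x : 'rV[R]_m) : x *m W = 0 -> x = 0.
  move=> hx; apply/eqP; apply/negPn/negP => xn0.
  have [k0 hk0] : exists k, x 0 k != 0.
    apply/existsP; apply: contraR xn0 => /existsPn h.
    by apply/eqP/matrixP => i j; rewrite ord1 mxE; apply/eqP/negPn/h.
  case: (@arg_maxnP _ k0 (fun k => x 0 k != 0) (fun k : 'I_m => nat_of_ord k) hk0) => K xK Kmax.
  have cN : (L + K < N)%N by have := ltn_ord K; rewrite /m; lia.
  pose c := Ordinal cN.
  have := congr1 (fun M : 'rV[R]_N => M 0 c) hx; rewrite !mxE (bigD1 K) //=.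
  rewrite big1 ?addr0.
    move=> /eqP; rewrite mulf_eq0 (negbTE xK) /= WE /=.
    have -> : (L + K + N - K = L + N)%N by lia.
    by rewrite uper (negbTE uL).
  move=> k kK; case: (eqVneq (x 0 k) 0) => [->|xk]; first by rewrite mul0r.
  have hk := Kmax k xk.
  have hk' : (k <= K)%N := hk.
  have kltK : (k < K)%N.
    by rewrite ltn_neqAle hk' andbT; apply: contra kK => /eqP h; apply/eqP/val_inj.
  rewrite WE /= -addnBAC; last by have := ltn_ord k; lia.
  rewrite uper uz ?mulr0 //; apply/andP; split; lia.
have rf : row_free W.
  rewrite -kermx_eq0; apply/eqP/row_matrixP => r; rewrite row0; apply: xW.
  by rewrite -row_mul mulmx_ker row0.
have : (W <= kermx C^T)%MS by apply/sub_kermxP.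
move/mxrankS; rewrite mxrank_ker mxrank_tr (eqP rf).
by [].
Qed.
End LA.


Lemma circ_far (n b k : nat) (i j : 'I_n.+1) :
  i = j - inZp b + inZp k -> (2 * b + 1 <= k < n.+1)%N -> (b < circdist n.+1 i j)%N.
Proof.
move=> hi /andP[k1 k2].
have e : (i + b = j + k %[mod n.+1])%N.
  have : i + inZp b = j + inZp k :> 'I_n.+1 by rewrite hi addrAC subrK.
  move/(congr1 val) => /=; by rewrite !modnDmr.
have hiN := ltn_ord i; have hjN := ltn_ord j.
have xl : (i + b < 2 * n.+1)%N by lia.
have yl : (j + k < 2 * n.+1)%N by lia.
move: e (divn_eq (i + b) n.+1) (divn_eq (j + k) n.+1).
have : ((i + b) %/ n.+1 < 2)%N by rewrite ltn_divLR //; lia.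
have : ((j + k) %/ n.+1 < 2)%N by rewrite ltn_divLR //; lia.
move: ((i + b) %/ n.+1)%N ((j + k) %/ n.+1)%N ((i + b) %% n.+1)%N ((j + k) %% n.+1)%N => q1 q2 r1 r2.
rewrite /circdist.
case: q1 => [|[|q1]]; case: q2 => [|[|q2]] => //= *; lia.
Qed.


Lemma arith (sp sq sp' sq' A B : nat) : (0 < sq)%N -> (0 < sq')%N ->
  (sp <= sq)%N -> (sp' < sq')%N ->
  (((2 + sq).-1 + sq').-1 <= maxn A B)%N ->
  (A <= (sp + sq').-1)%N -> (B <= (sp' + sq).-1)%N -> False.
Proof. lia. Qed.

Lemma not_proper_s (R : realType) (f g : tf R) :
  proper_tf f -> strictly_proper_tf g -> f + g = tfs R -> False.
Proof.
move=> [p [q [q0 [-> hpq]]]] [p' [q' [q'0 [-> hpq']]]] e.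
have Q0 : tfpoly q != 0 by rewrite tfpoly_eq0.
have Q'0 : tfpoly q' != 0 by rewrite tfpoly_eq0.
have : tfpoly ('X * q * q') = tfpoly (p * q' + p' * q).
  rewrite !tfpolyM tfpolyD !tfpolyM -/(tfs R) -e mulrDl mulrDl.
  by rewrite (divfK Q0) (mulrAC (tfpoly p' / tfpoly q')) (divfK Q'0).
move/tfpoly_inj => E.
have s1 := size_mul (mulf_neq0 (negbT (polyX_eq0 R)) q0) q'0.
have s1' := size_mul (negbT (polyX_eq0 R)) q0.
have s2 := size_polyD (p * q') (p' * q).
have s3 := size_mul_leq p q'.
have s4 := size_mul_leq p' q.
have g1 := size_poly_gt0 q; have g2 := size_poly_gt0 q'.
rewrite q0 in g1; rewrite q'0 in g2.
rewrite -E s1 s1' size_polyX -[2%R]/2%N in s2.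
exact: (arith _ _ _ _ _ _ g1 g2 hpq hpq' s2 s3 s4).
Qed.


Lemma tfconstM (R : realType) (a c : R) : tfconst (a * c) = tfconst a * tfconst c.
Proof. by rewrite /tfconst polyCM tfpolyM. Qed.
Lemma tfconst1 (R : realType) : tfconst (1 : R) = 1.
Proof. by rewrite /tfconst polyC1 tfpoly1. Qed.
Lemma reg0_1 (R : realType) : reg0 (1 : tf R) 1.
Proof. by have := reg0_const (1 : R); rewrite tfconst1. Qed.
Lemma reg0_0 (R : realType) : reg0 (0 : tf R) 0.
Proof. by have := reg0_const (0 : R); rewrite /tfconst polyC0 tfpoly0. Qed.

Lemma main_n (R : realType) (n b : nat) (gamma : R) (C : 'M[R]_n.+1) :
  (3 <= n.+1)%N -> (1 <= b)%N -> 0 < gamma ->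
  circulant C -> C *m (const_mx 1 : 'cV[R]_n.+1) = 0 ->
  (2 * b + 1 < \rank C)%N ->
  ~ exists K : 'M[tf R]_n.+1,
      mx_all (@proper_tf R) K /\
      K *m (const_mx 1 : 'cV[tf R]_n.+1) = 0 /\
      mx_all (@strictly_proper_tf R) (Phi_x K) /\
      mx_all (@strictly_proper_tf R) (Phi_u K) /\
      tf_structured (Ab n.+1 b) (Phi_x K) /\
      tf_structured (Ab n.+1 b) (Phi_u K) /\
      mx_all (@stable_tf R) (closed_loop C gamma K).
Proof.
move=> hN hb hg hC hC1 hr [K [Kp [K1 [Xsp [Usp [Xst [Ust Fst]]]]]]].
set A := (tfs R)%:M - K.
have Aunit : A \in unitmx.
  case hA : (A \in unitmx) => //; exfalso.
  have hX : Phi_x K = A by rewrite /Phi_x -/A invmx_out // inE hA.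
  have := Xsp 0 0; rewrite hX /A !mxE eqxx mulr1n => sp.
  by apply: (@not_proper_s R _ _ (Kp 0 0) sp); rewrite addrCA subrr addr0.
set X := Phi_x K in Xsp Xst Usp Ust Fst *.
have XA : X *m A = 1%:M by apply: mulVmx.
have AX : A *m X = 1%:M by apply: mulmxV.
have KA : K = (tfs R)%:M - A by rewrite /A opprB addrC subrK.
have U : Phi_u K = tfs R *: X - 1%:M.
  by rewrite /Phi_u -/X {1}KA mulmxBl mul_scalar_mx AX.
pose M i j := tfs R * X i j.
have MU i j : M i j = Phi_u K i j + (i == j)%:R.
  by rewrite U !mxE subrK.
have regU i j : exists c, reg0 (Phi_u K i j) c.
  have := Fst (rshift n.+1 i) j; rewrite /closed_loop col_mxEd mxE.
  move=> /stable_reg0 [c hc].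
  exists (gamma^-1 * c).
  have -> : Phi_u K i j = tfconst gamma^-1 * (tfconst gamma * Phi_u K i j).
    by rewrite mulrA -tfconstM mulVf ?gt_eqF // tfconst1 mul1r.
  exact: reg0M (reg0_const _) hc.
have regM i j : exists c, reg0 (M i j) c.
  case: (regU i j) => c hc; exists (c + (i == j)%:R); rewrite MU.
  apply: reg0D hc _.
  by case: (i == j); [rewrite !mulr1n; exact: reg0_1 | rewrite !mulr0n; exact: reg0_0].
have [mf hmf] := fin_all_exists (fun i => fin_all_exists (regM i)).
pose mm := \matrix_(i, j) mf i j : 'M[R]_n.+1.
have Cm : C *m mm = 0.
  apply/matrixP => l j; rewrite !mxE.
  have h0 : reg0 (tfs R * (map_mx (@tfconst R) C *m X) l j) 0.
    apply: stable_reg0X; have := Fst (lshift n.+1 l) j.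
    by rewrite /closed_loop col_mxEu.
  have h1 : reg0 (tfs R * (map_mx (@tfconst R) C *m X) l j) (\sum_i C l i * mm i j).
    rewrite !mxE mulr_sumr; apply: reg0_sum => i; rewrite !mxE mulrCA.
    exact: reg0M (reg0_const _) (hmf i j).
  have := reg0_uniq h1 h0.
  by under eq_bigr do rewrite mxE.
have m1 i : \sum_j mf i j = 1.
  have h1 : reg0 (\sum_j M i j) (\sum_j mf i j) := reg0_sum (hmf i).
  have A1 : A *m const_mx 1 = tfs R *: (const_mx 1 : 'cV[tf R]_n.+1).
    by rewrite /A mulmxBl K1 subr0 mul_scalar_mx.
  have := congr1 (fun Z => (X *m Z) i 0) A1.
  rewrite mulmxA XA mul1mx -scalemxAr !mxE => e.
  have e2 : \sum_j M i j = 1.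
    rewrite e mulr_sumr; apply: eq_bigr => j _; rewrite mxE mulr1.
    by [].
  by have := reg0_uniq h1 (eq_ind_r (fun z => reg0 z 1) (reg0_1 R) e2).
have band (i j : 'I_n.+1) : (b < circdist n.+1 i j)%N -> mf i j = 0.
  move=> hij; have hA : Ab n.+1 b i j = 0%N by rewrite mxE leqNgt hij.
  have hX0 := Xst i j hA.
  have h0 : reg0 (M i j) 0 by rewrite /M hX0 mulr0; exact: reg0_0.
  exact: reg0_uniq (hmf i j) h0.
have [j hj] : exists j, mf 0 j != 0.
  case: (boolP [exists j, mf 0 j != 0]) => [/existsP//|/existsPn h].
  exfalso; have := m1 0; rewrite big1 => [/esym/eqP|j _]; first by rewrite oner_eq0.
  by apply/eqP/negPn/h.
pose v := col j mm.
have Cv : C *m v = 0.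
  apply/matrixP => l k; have := congr1 (fun Z : 'M[R]_n.+1 => Z l j) Cm.
  rewrite !mxE => h; apply: eq_trans _ h; apply: eq_bigr => i _; rewrite !mxE.
  by [].
have vn0 : v != 0.
  apply/negP => /eqP v0; move: hj; have := congr1 (fun Z : 'cV[R]_n.+1 => Z 0 0) v0.
  by rewrite !mxE => ->; rewrite eqxx.
have win k : (2 * b + 1 <= k < n.+1)%N -> v (j - inZp b + inZp k) 0 = 0.
  move=> hk; rewrite !mxE; apply: band; exact: circ_far.
have rC := rank_leq_col C.
have hw : (1 <= 2 * b + 1 <= n.+1)%N by apply/andP; split; lia.
have rk := @band_rank R n C v (j - inZp b) (2 * b + 1)%N hC Cv vn0 hw win.
lia.
Qed.

Theorem theorem2 (R : realType) (N b : nat) (gamma : R) (C : 'M[R]_N) :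
  (3 <= N)%N -> (1 <= b)%N -> 0 < gamma ->
  circulant C -> C *m (const_mx 1 : 'cV[R]_N) = 0 ->
  (2 * b + 1 < \rank C)%N ->
  ~ exists K : 'M[tf R]_N,
      mx_all (@proper_tf R) K /\
      K *m (const_mx 1 : 'cV[tf R]_N) = 0 /\
      mx_all (@strictly_proper_tf R) (Phi_x K) /\
      mx_all (@strictly_proper_tf R) (Phi_u K) /\
      tf_structured (Ab N b) (Phi_x K) /\
      tf_structured (Ab N b) (Phi_u K) /\
      mx_all (@stable_tf R) (closed_loop C gamma K).
Proof.
case: N C => [|n] C; first by [].
exact: main_n.
Qed.
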